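(* Let $\mathfrak{R}$ be a read set with maximal read length $L$. Then every string of length $2L$ and every non-contained read of $\mathfrak{R}$ is a conductor for $\mathrm{CC}(\mathfrak{R})$.
   Context: All strings are over a fixed finite alphabet $\Sigma$ (in the paper's convention this is the alphabet of $k$-mers, so overlaps of length at least $1$ correspond to overlaps of at least $k$ nucleotides). A cyclic string is a bi-infinite periodic word $\mathbb{Z}\to\Sigma$ up to shift; for a nonempty finite $x$, $\langle x\rangle$ is the cyclic string repeating $x$ in both directions. A read set $\mathfrak{R}$ is a finite set of nonempty finite strings (reads); a read is non-contained if it is not a substring of any other read of $\mathfrak{R}$. A read chain is a sequence of reads $r_1,\dots,r_n$ (repetitions allowed) together with integers $t_1,\dots,t_{n-1}$ with $1\le t_i\le\min(|r_i|,|r_{i+1}|)$ such that the length-$t_i$ suffix of $r_i$ equals the length-$t_i$ prefix of $r_{i+1}$; its merged string is $r_1$ followed, for $i=1,\dots,n-1$, by $r_{i+1}$ with its first $t_i$ characters removed. A chain is cyclic if $n\ge 2$ and $r_1=r_n$; then its merged string has the form $r_1x$, and if $x$ is nonempty the label of the cyclic chain is $\langle x\rangle$. $\mathrm{CC}(\mathfrak{R})$ is the set of labels of cyclic read chains. A finite string $v$ is a conductor for a set $\mathfrak{C}$ of cyclic strings if for all nonempty finite strings $a,b$ such that $va$ and $vb$ both end with $v$, we have $\langle ab\rangle\in\mathfrak{C}$ if and only if $\langle a\rangle\in\mathfrak{C}$ and $\langle b\rangle\in\mathfrak{C}$. *)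

(* Defs.v *)
From mathcomp Require Import all_boot all_order all_algebra.
Set Implicit Arguments. Unset Strict Implicit. Unset Printing Implicit Defensive.
Import GRing.Theory Num.Theory.

Section Defs.
Variable S : finType.

(* A cyclic string (bi-infinite word Z -> Sigma) is represented as a map
   int -> option S; cyclic strings coming from nonempty words never take
   the value None.  "Up to shift" is handled by [cyc_eq]. *)
Definition cstring := int -> option S.

Definition cyc (x : seq S) : cstring :=
  fun i => nth None (map Some x) `|(i %% (size x)%:Z)%Z|%N.

Definition cyc_eq (f g : cstring) : Prop :=
  exists k : int, forall i : int, f (i + k)%R = g i.

Definition read_chain (R : seq (seq S)) (rs : seq (seq S)) (ts : seq nat) : Prop :=
  0 < size rs /\ size ts = (size rs).-1 /\
  (forall r, r \in rs -> r \in R) /\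
  (forall i, i < (size rs).-1 ->
     let ri := nth [::] rs i in
     let rj := nth [::] rs i.+1 in
     let t := nth 0 ts i in
     1 <= t <= minn (size ri) (size rj) /\
     drop (size ri - t) ri = take t rj).

Definition merged (rs : seq (seq S)) (ts : seq nat) : seq S :=
  nth [::] rs 0 ++
  flatten [seq drop (nth 0 ts i) (nth [::] rs i.+1) | i <- iota 0 (size rs).-1].

Definition cyclic_chain (R : seq (seq S)) rs ts : Prop :=
  read_chain R rs ts /\ 2 <= size rs /\ nth [::] rs 0 = last [::] rs.

Definition CC (R : seq (seq S)) (w : cstring) : Prop :=
  exists rs ts, cyclic_chain R rs ts /\
    let x := drop (size (nth [::] rs 0)) (merged rs ts) in
    x != [::] /\ cyc_eq (cyc x) w.

Definition conductor (C : cstring -> Prop) (v : seq S) : Prop :=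
  forall a b : seq S, a != [::] -> b != [::] ->
    suffix v (v ++ a) -> suffix v (v ++ b) ->
    (C (cyc (a ++ b)) <-> C (cyc a) /\ C (cyc b)).

Definition read_set (R : seq (seq S)) : Prop := [::] \notin R.

Definition max_read_length (R : seq (seq S)) : nat := \max_(r <- R) size r.

Definition non_contained (R : seq (seq S)) (r : seq S) : Prop :=
  r \in R /\ forall r', r' \in R -> r' != r -> ~~ infix r r'.

End Defs.

(* Main.v *)
Require Import Defs.
From mathcomp Require Import all_boot all_order all_algebra zify.
Import Order.TTheory GRing.Theory Num.Theory.
Set Implicit Arguments. Unset Strict Implicit. Unset Printing Implicit Defensive.
Local Open Scope ring_scope.

Definition nthS (S : Type) (x : seq S) (n : nat) : option S := nth None (map Some x) n.

Definition occ (S : finType) (f : cstring S) (r : seq S) (p : int) : Prop :=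
  forall i : nat, (i < size r)%N -> f (p + i%:Z) = nthS r i.

Definition spanned (S : finType) (R : seq (seq S)) (f : cstring S) (q : int) : Prop :=
  exists (r : seq S) (p : int), r \in R /\ occ f r p /\ p < q /\ q < p + (size r)%:Z.

Definition covered (S : finType) (R : seq (seq S)) (f : cstring S) : Prop :=
  forall q, spanned R f q.

Lemma cyc_per (S : finType) (x : seq S) k :
  cyc x (k + (size x)%:Z) = cyc x k.
Proof. by rewrite /cyc modzDr. Qed.

Lemma per_mul (S : finType) (g : cstring S) (P : int) :
  (forall k, g (k + P) = g k) -> forall k (z : int), g (k + z * P) = g k.
Proof.
move=> hP k z; case: z => n.
  elim: n k => [|n IH] k; first by rewrite mul0r addr0.
  by rewrite -addn1 PoszD mulrDl mul1r addrA hP IH.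
elim: n k => [|n IH] k.
  by rewrite NegzE mulN1r -(hP (k + - P)) -addrA addNr addr0.
rewrite NegzE -addn1 !PoszD mulNr mulrDl mul1r opprD addrA.
by rewrite -(hP (k + _ - P)) -addrA addNr addr0 -mulNr -NegzE IH.
Qed.

Lemma cyc_nat (S : finType) (x : seq S) (n : nat) :
  (n < size x)%N -> cyc x n%:Z = nthS x n.
Proof.
move=> h; rewrite /cyc modz_nat modn_small //.
Qed.

Lemma cyc_unique (S : finType) (x : seq S) (g : cstring S) :
  x != [::] -> (forall k, g (k + (size x)%:Z) = g k) ->
  (forall n : nat, (n < size x)%N -> g n%:Z = nthS x n) ->
  forall k, g k = cyc x k.
Proof.
move=> xn hP hn k.
have sx : (size x)%:Z != 0 by rewrite eqz_nat size_eq0.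
rewrite {1}(divz_eq k (size x)) addrC per_mul //.
have h0 := modz_ge0 k sx.
have h1 : (k %% (size x)%:Z)%Z < (size x)%:Z.
  by apply: ltz_pmod; rewrite ltz_nat lt0n size_eq0.
rewrite /cyc -{1}(gez0_abs h0) hn //.
by rewrite -ltz_nat gez0_abs.
Qed.
Lemma spanned_shift (S : finType) (R : seq (seq S)) (f : cstring S) q k :
  spanned R f (q + k) -> spanned R (fun i => f (i + k)) q.
Proof.
case=> r [p [rR [oc [h1 h2]]]]; exists r, (p - k); split=> //; split; last lia.
move=> i hi /=; rewrite -oc //; congr f; lia.
Qed.

Lemma spanned_unshift (S : finType) (R : seq (seq S)) (f : cstring S) q k :
  spanned R (fun i => f (i + k)) q -> spanned R f (q + k).
Proof.
case=> r [p [rR [oc [h1 h2]]]]; exists r, (p + k); split=> //; split; last lia.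
move=> i hi /=; rewrite -oc //; congr f; lia.
Qed.

Lemma covered_shift (S : finType) (R : seq (seq S)) (f : cstring S) k :
  covered R f -> covered R (fun i => f (i + k)).
Proof. by move=> h q; apply: spanned_shift. Qed.

Lemma occ_agree (S : finType) (f g : cstring S) r p :
  occ f r p -> (forall i : int, p <= i < p + (size r)%:Z -> f i = g i) -> occ g r p.
Proof. by move=> oc h i hi; rewrite -h ?oc //; lia. Qed.

Lemma spanned_window (S : finType) (R : seq (seq S)) (L : nat) (f g : cstring S) (q : int) :
  (forall r : seq S, r \in R -> (size r <= L)%N) ->
  (forall i : int, q - L%:Z <= i < q + L%:Z -> f i = g i) ->
  spanned R f q -> spanned R g q.
Proof.
move=> hL hfg [r [p [rR [oc [h1 h2]]]]]; exists r, p; split=> //; split=> //.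
apply: occ_agree oc _ => i hi; apply: hfg.
have := hL r rR; lia.
Qed.

Lemma spanned_per (S : finType) (R : seq (seq S)) (f : cstring S) (d : int) q z :
  (forall k, f (k + d) = f k) -> spanned R f q -> spanned R f (q + z * d).
Proof.
move=> hP [r [p [rR [oc [h1 h2]]]]]; exists r, (p + z * d); split=> //; split; last lia.
move=> i hi; rewrite -oc // -(per_mul hP (p + i%:Z) z); congr f; lia.
Qed.

Lemma covered_per (S : finType) (R : seq (seq S)) (f : cstring S) (d : int) lo :
  (forall k, f (k + d) = f k) -> 0 < d ->
  (forall q, lo <= q < lo + d -> spanned R f q) -> covered R f.
Proof.
move=> hP d0 h q.
have e := divz_eq (q - lo) d.
have m0 := modz_ge0 (q - lo) (lt0r_neq0 d0).
have m1 := ltz_pmod (q - lo) d0.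
have := spanned_per ((q - lo) %/ d)%Z hP (h (lo + ((q - lo) %% d)%Z) _).
have -> : lo + ((q - lo) %% d)%Z + ((q - lo) %/ d)%Z * d = q by lia.
apply; lia.
Qed.

Lemma nthS_cat (S : Type) (s1 s2 : seq S) i :
  nthS (s1 ++ s2) i = if (i < size s1)%N then nthS s1 i else nthS s2 (i - size s1).
Proof. by rewrite /nthS map_cat nth_cat size_map. Qed.

Lemma nthS_drop (S : Type) (s : seq S) k i : nthS (drop k s) i = nthS s (k + i).
Proof. by rewrite /nthS map_drop nth_drop. Qed.

Lemma nthS_take (S : Type) (s : seq S) k i : (i < k)%N -> nthS (take k s) i = nthS s i.
Proof. by move=> h; rewrite /nthS map_take nth_take. Qed.

Lemma cyc_suffix (S : finType) (v a : seq S) : a != [::] -> suffix v (v ++ a) ->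
  forall i : nat, (i < size v + size a)%N -> cyc a (i%:Z - (size v)%:Z) = nthS (v ++ a) i.
Proof.
move=> an /suffixP [a0 e0].
have [a' e] : exists a' : seq S, v ++ a = a' ++ v by exists a0.
have sa' : size a' = size a.
  by move/(congr1 size): e; rewrite !size_cat [(size a' + _)%N]addnC => /eqP; rewrite eqn_add2l => /eqP.
have d0 : (0 < size a)%N by rewrite lt0n size_eq0.
have per : forall i, (i + size a < size v + size a)%N -> nthS (v ++ a) (i + size a) = nthS (v ++ a) i.
  move=> i hi; rewrite {1}e nthS_cat sa' ltnNge leq_addl /= addnK nthS_cat.
  by have -> : (i < size v)%N by lia.
suff: forall k i, (size v - i <= k)%N -> (i < size v + size a)%N ->
   cyc a (i%:Z - (size v)%:Z) = nthS (v ++ a) i by move=> h i; apply: h (leqnn _).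
elim=> [|k IH] i hk hi.
  have hv : (size v <= i)%N by lia.
  rewrite nthS_cat ltnNge hv /= -cyc_nat; last by lia.
  congr cyc; lia.
case: (ltnP i (size v)) => hv; last first.
  rewrite nthS_cat ltnNge hv /= -cyc_nat; last by lia.
  congr cyc; lia.
rewrite -per; last by lia.
rewrite -IH; [|lia|lia].
rewrite -cyc_per; congr cyc; lia.
Qed.

Lemma nthS_eq (S : Type) (s1 s2 : seq S) : size s1 = size s2 ->
  (forall i, (i < size s1)%N -> nthS s1 i = nthS s2 i) -> s1 = s2.
Proof.
move=> hs h; apply: (@inj_map _ _ Some); first by move=> x y [].
apply: (eq_from_nth (x0 := None)); rewrite !size_map //.
Qed.

Lemma int_nat_split (i c : int) : c <= i -> exists n : nat, i = n%:Z + c.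
Proof. move=> h; exists `|i - c|%N; lia. Qed.

Lemma suffix_ex (S : finType) (v u : seq S) : suffix v u -> exists a' : seq S, u = a' ++ v.
Proof. by move=> /suffixP [a0 e]; exists a0. Qed.

Lemma suffix_cat (S : finType) (v a b : seq S) :
  suffix v (v ++ a) -> suffix v (v ++ b) -> suffix v (v ++ (a ++ b)).
Proof.
move=> /suffix_ex [a' ea] /suffix_ex [b' eb]; apply/suffixP; exists (a' ++ b').
by rewrite catA ea -catA eb catA.
Qed.

Lemma cyc_cat_agree (S : finType) (v a b : seq S) : a != [::] -> b != [::] ->
  suffix v (v ++ a) -> suffix v (v ++ b) ->
  (forall i : int, - (size v)%:Z <= i < (size a)%:Z -> cyc (a ++ b) i = cyc a i) /\
  (forall i : int, - (size v)%:Z <= i < (size b)%:Z -> cyc (a ++ b) (i + (size a)%:Z) = cyc b i).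
Proof.
move=> an bn sa sb.
have abn : a ++ b != [::] by rewrite -size_eq0 size_cat addn_eq0 size_eq0 negb_and an.
have sab := suffix_cat sa sb.
split=> i /andP [hi1 hi2]; have [n en] := int_nat_split hi1; subst i.
- rewrite (cyc_suffix abn sab) ?(cyc_suffix an sa); [|lia|rewrite size_cat; lia].
  rewrite catA nthS_cat size_cat.
  by have -> : (n < size v + size a)%N by lia.
- move: sa => /suffixP [a0 ea0].
  have [a' ea] : exists a' : seq S, v ++ a = a' ++ v by exists a0.
  have sa' : size a' = size a.
    by move/(congr1 size): ea; rewrite !size_cat [(size a' + _)%N]addnC => /eqP; rewrite eqn_add2l => /eqP.
  have -> : n%:Z + - (size v)%:Z + (size a)%:Z = (n + size a)%N%:Z - (size v)%:Z by lia.
  rewrite (cyc_suffix abn sab) ?(cyc_suffix bn sb); [|lia|rewrite size_cat; lia].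
  rewrite catA ea -catA nthS_cat sa' ltnNge leq_addl /= addnK; congr nthS; lia.
Qed.

Lemma occ_suffix (S : finType) (v a : seq S) : a != [::] -> suffix v (v ++ a) ->
  occ (cyc a) v (- (size v)%:Z) /\ occ (cyc a) v ((size a)%:Z - (size v)%:Z).
Proof.
move=> an sa; have sa0 := sa; move: sa0 => /suffixP [a0 ea0].
have [a' ea] : exists a' : seq S, v ++ a = a' ++ v by exists a0.
have sa' : size a' = size a.
  by move/(congr1 size): ea; rewrite !size_cat [(size a' + _)%N]addnC => /eqP; rewrite eqn_add2l => /eqP.
split=> i hi.
- have -> : - (size v)%:Z + i%:Z = i%:Z - (size v)%:Z by lia.
  rewrite cyc_suffix //; last by lia.
  by rewrite nthS_cat hi.
- have -> : (size a)%:Z - (size v)%:Z + i%:Z = (size a + i)%N%:Z - (size v)%:Z by lia.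
  rewrite cyc_suffix //; last by lia.
  by rewrite ea nthS_cat sa' ltnNge leq_addr /= addKn.
Qed.

Definition transfer_ok (S : finType) (R : seq (seq S)) (v : seq S) (lo : int) :=
  forall (f g : cstring S) (D : nat), (0 < D)%N ->
  (forall i : int, - (size v)%:Z <= i < D%:Z -> f i = g i) ->
  occ f v (- (size v)%:Z) -> occ f v (D%:Z - (size v)%:Z) ->
  forall q : int, lo <= q < lo + D%:Z -> spanned R f q -> spanned R g q.

Lemma conductor_gen (S : finType) (R : seq (seq S)) (v : seq S) (lo : int) :
  (forall w : seq S, w != [::] -> CC R (cyc w) <-> covered R (cyc w)) ->
  transfer_ok R v lo -> conductor (CC R) v.
Proof.
move=> hCC T a b an bn sa sb.
have abn : a ++ b != [::] by rewrite -size_eq0 size_cat addn_eq0 size_eq0 negb_and an.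
have [F1 F2] := cyc_cat_agree an bn sa sb.
have [oa1 oa2] := occ_suffix an sa.
have [ob1 ob2] := occ_suffix bn sb.
have a0 : (0 < size a)%N by rewrite lt0n size_eq0.
have b0 : (0 < size b)%N by rewrite lt0n size_eq0.
rewrite !hCC //; split.
- move=> cov; split.
  + apply: (covered_per (d := (size a)%:Z) (lo := lo) (@cyc_per S a)) => [|q hq]; first lia.
    apply: (T (cyc (a ++ b)) (cyc a) (size a)) => //.
    * apply: occ_agree oa1 _ => i hi; apply: esym; apply: F1; lia.
    * apply: occ_agree oa2 _ => i hi; apply: esym; apply: F1; lia.
  + apply: (covered_per (d := (size b)%:Z) (lo := lo) (@cyc_per S b)) => [|q hq]; first lia.
    apply: (T (fun i => cyc (a ++ b) (i + (size a)%:Z)) (cyc b) (size b)) => //.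
    * apply: occ_agree ob1 _ => i hi; apply: esym; apply: F2; lia.
    * apply: occ_agree ob2 _ => i hi; apply: esym; apply: F2; lia.
    * exact: spanned_shift.
- move=> [cova covb].
  apply: (covered_per (d := (size (a ++ b))%:Z) (lo := lo) (@cyc_per S (a ++ b))) => [|q hq].
    rewrite size_cat; lia.
  case: (ltP q (lo + (size a)%:Z)) => hq2.
  + apply: (T (cyc a) (cyc (a ++ b)) (size a)) => //.
    * by move=> i hi; rewrite F1.
    * move: hq; rewrite size_cat; lia.
  + have -> : q = (q - (size a)%:Z) + (size a)%:Z by lia.
    apply: spanned_unshift.
    apply: (T (cyc b) (fun i => cyc (a ++ b) (i + (size a)%:Z)) (size b)) => //.
    * by move=> i hi; rewrite F2.
    * move: hq; rewrite size_cat; lia.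
Qed.

Lemma transfer_window (S : finType) (R : seq (seq S)) (L : nat) (v : seq S) :
  (forall r : seq S, r \in R -> (size r <= L)%N) -> size v = (2 * L)%N ->
  transfer_ok R v (- L%:Z).
Proof.
move=> hL hv f g D D0 agr _ _ q hq; apply: spanned_window hL _ => i hi.
apply: agr; rewrite hv; lia.
Qed.

Lemma occ_infix (S : finType) (f : cstring S) (r r' : seq S) (p p' : int) :
  occ f r' p -> occ f r p' -> p <= p' -> p' + (size r)%:Z <= p + (size r')%:Z ->
  infix r r'.
Proof.
move=> o' o h1 h2.
have [k ek] := int_nat_split h1.
have e : r = take (size r) (drop k r').
  apply: nthS_eq.
    rewrite size_take size_drop; move: h2; rewrite ek.
    case: ltnP => h; lia.
  move=> i hi; rewrite nthS_take // nthS_drop -o' -?o //; last by move: h2; lia.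
  congr f; rewrite ek; lia.
apply/infixP; exists (take k r'), (drop (size r) (drop k r')).
move: e; set n := size r => e.
by rewrite e !cat_take_drop.
Qed.

Lemma transfer_nc (S : finType) (R : seq (seq S)) (r : seq S) :
  r != [::] -> non_contained R r -> transfer_ok R r (- (size r)%:Z + 1).
Proof.
move=> rn [rR nc] f g D D0 agr o1 o2 q hq [r' [p [rR' [o' [h1 h2]]]]].
have n0 : (0 < size r)%N by rewrite lt0n size_eq0.
have g1 : occ g r (- (size r)%:Z) by apply: occ_agree o1 _ => i hi; apply: agr; lia.
have g2 : occ g r (D%:Z - (size r)%:Z) by apply: occ_agree o2 _ => i hi; apply: agr; lia.
case: (ltP q 0) => hq0.
  by exists r, (- (size r)%:Z); split=> //; split=> //; lia.
case: (ltP (D%:Z - (size r)%:Z) q) => hq1.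
  by exists r, (D%:Z - (size r)%:Z); split=> //; split=> //; lia.
have ne : forall p0 : int, p < p0 -> p0 + (size r)%:Z <= p + (size r')%:Z -> occ f r p0 -> False.
  move=> p0 hp0 hp1 o0.
  have neq : r' != r by apply/eqP=> err; move: hp1 hp0; rewrite err; lia.
  apply: (negP (nc r' rR' neq)).
  by apply: occ_infix o' o0 _ _ => //; lia.
case: (ltP p (- (size r)%:Z)) => hp1.
  by exfalso; apply: (ne _ hp1 _ o1); lia.
case: (ltP (D%:Z) (p + (size r')%:Z)) => hp2.
  by exfalso; apply: (ne _ _ _ o2); lia.
exists r', p; split=> //; split=> //.
apply: occ_agree o' _ => i hi; apply: agr; lia.
Qed.

Lemma covered_ext (S : finType) (R : seq (seq S)) (f g : cstring S) :
  (forall i, f i = g i) -> covered R f -> covered R g.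
Proof.
move=> e c q; case: (c q) => r [p [rR [o h]]]; exists r, p; split=> //; split=> //.
by move=> i hi; rewrite -e o.
Qed.

Definition sw (S : finType) (u : seq S) : cstring S :=
  fun i => match i with Posz n => nthS u n | Negz _ => None end.

Lemma nthS_some (S : eqType) (s : seq S) i : (i < size s)%N -> nthS s i != None.
Proof. by elim: s i => [|x s IH] [|i] //= h; apply: IH. Qed.

Lemma nthS_lt (S : eqType) (s : seq S) i : nthS s i != None -> (i < size s)%N.
Proof. by elim: s i => [|x s IH] [|i] //= h; apply: IH. Qed.

Lemma occ_sw_to (S : finType) (u : seq S) (g : cstring S) r p :
  (forall n : nat, (n < size u)%N -> g n%:Z = nthS u n) -> occ (sw u) r p -> occ g r p.
Proof.
move=> h o i hi; rewrite -o //.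
have := nthS_some hi; rewrite -o //.
case: (p + i%:Z) => n //= hn.
by rewrite h // nthS_lt.
Qed.

Lemma spanned_sw_to (S : finType) (R : seq (seq S)) (u : seq S) (g : cstring S) q :
  (forall n : nat, (n < size u)%N -> g n%:Z = nthS u n) -> spanned R (sw u) q -> spanned R g q.
Proof.
move=> h [r [p [rR [o hh]]]]; exists r, p; split=> //; split=> //.
exact: occ_sw_to o.
Qed.

Lemma spanned_sw_cat (S : finType) (R : seq (seq S)) (u u' : seq S) q :
  spanned R (sw u) q -> spanned R (sw (u ++ u')) q.
Proof.
apply: spanned_sw_to => n hn /=; by rewrite nthS_cat hn.
Qed.

Lemma occ_sw_mid (S : finType) (Y r Z : seq S) : occ (sw (Y ++ r ++ Z)) r (size Y)%:Z.
Proof.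
move=> i hi; rewrite -PoszD /= nthS_cat ltnNge leq_addr /= addKn nthS_cat hi //.
Qed.

Definition Mk (S : finType) (rs : seq (seq S)) (ts : seq nat) (k : nat) : seq S :=
  nth [::] rs 0 ++ flatten [seq drop (nth 0%N ts i) (nth [::] rs i.+1) | i <- iota 0 k].

Lemma Mk_S (S : finType) (rs : seq (seq S)) ts k :
  Mk rs ts k.+1 = Mk rs ts k ++ drop (nth 0%N ts k) (nth [::] rs k.+1).
Proof. by rewrite /Mk -addn1 iotaD map_cat flatten_cat /= add0n cats0 catA addn1. Qed.

Lemma chain_inv (S : finType) (R : seq (seq S)) rs ts :
  read_chain R rs ts -> forall k, (k <= (size rs).-1)%N ->
  (exists Y : seq S, Mk rs ts k = Y ++ nth [::] rs k) /\
  (forall q : int, 1 <= q < (size (Mk rs ts k))%:Z -> spanned R (sw (Mk rs ts k)) q).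
Proof.
move=> [s0 [sts [inR st]]]; elim=> [|k IH] hk.
  have -> : Mk rs ts 0 = nth [::] rs 0 by rewrite /Mk /= cats0.
  split; first by exists [::].
  move=> q hq; exists (nth [::] rs 0), (Posz 0); split; first by apply: inR; apply: mem_nth.
  split; first by have := @occ_sw_mid S [::] (nth [::] rs 0) [::]; rewrite cats0.
  lia.
have [[Y eY] sp] := IH (ltnW hk).
have [/andP [t1 t2] hd] := st k hk.
set ri := nth [::] rs k in eY hd t2; set rj := nth [::] rs k.+1 in hd t2 *.
set t := nth 0%N ts k in hd t1 t2 *.
have tri : (t <= size ri)%N by move: t2; rewrite leq_min => /andP [].
have trj : (t <= size rj)%N by move: t2; rewrite leq_min => /andP [].
set Y' := Y ++ take (size ri - t) ri.
have eY' : Mk rs ts k.+1 = Y' ++ rj.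
  rewrite Mk_S eY /Y' -catA -{1}(cat_take_drop (size ri - t) ri) -catA hd.
  by rewrite -catA; congr (_ ++ _); congr (_ ++ _); exact: cat_take_drop.
have sY' : size Y' = (size Y + size ri - t)%N.
  rewrite /Y' size_cat size_take; case: ltnP => h; lia.
have sM : size (Mk rs ts k) = (size Y + size ri)%N by rewrite eY size_cat.
have hk1 : (k.+1 < size rs)%N by move: hk; case: (size rs) => [|n] //=; lia.
have rjR : rj \in R by apply: inR; apply: mem_nth.
split; first by exists Y'.
move=> q hq.
case: (ltP q (size (Mk rs ts k))%:Z) => hq1.
  rewrite Mk_S; apply: spanned_sw_cat; apply: sp; lia.
rewrite eY'; exists rj, (size Y')%:Z; split=> //; split.
  by rewrite -[Y' ++ rj]cats0 -catA; apply: occ_sw_mid.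
move: hq hq1; rewrite eY' size_cat sY' sM; lia.
Qed.

Lemma chain_covered (S : finType) (R : seq (seq S)) rs ts :
  read_set R -> cyclic_chain R rs ts ->
  drop (size (nth [::] rs 0)) (merged rs ts) != [::] ->
  covered R (cyc (drop (size (nth [::] rs 0)) (merged rs ts))).
Proof.
move=> rset [rc [s2 cyc1]].
set r1 := nth [::] rs 0; set x := drop _ _ => xn.
have em : merged rs ts = r1 ++ x by rewrite /x /merged drop_size_cat.
have [[Y eY] sp] := chain_inv rc (leqnn _).
have eM : Mk rs ts (size rs).-1 = merged rs ts by [].
rewrite eM nth_last -cyc1 -/r1 in eY.
rewrite eM in sp.
have r1R : r1 \in R by case: rc => [s0 [_ [inR _]]]; apply: inR; apply: mem_nth.
have r1n : (0 < size r1)%N.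
  rewrite lt0n size_eq0; apply/eqP => e; move: rset; rewrite /read_set -e r1R.
  done.
have suf : suffix r1 (r1 ++ x) by apply/suffixP; exists Y; rewrite -em.
have hx := cyc_suffix xn suf.
have x0 : (0 < size x)%N by rewrite lt0n size_eq0.
apply: (covered_per (d := (size x)%:Z) (lo := 0) (@cyc_per S x)) => [|q hq]; first lia.
have := sp (q + (size r1)%:Z).
rewrite em size_cat => /(_ _) h.
have {h} h := h ltac:(lia).
have := spanned_unshift (k := - (size r1)%:Z) (spanned_sw_to (g := fun i => cyc x (i + - (size r1)%:Z)) _ h).
rewrite -addrA subrr addr0; apply.
by move=> n hn /=; rewrite hx // -size_cat.
Qed.

Definition Gw (S : finType) (w : seq S) (n : nat) : option S := cyc w n%:Z.

Definition occb (S : finType) (w : seq S) (r : seq S) (p : nat) : bool :=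
  all (fun i => Gw w (p + i) == nthS r i) (iota 0 (size r)).

Definition good (S : finType) (R : seq (seq S)) (w : seq S) (q : nat) (rp : seq S * nat) : bool :=
  [&& rp.1 \in R, occb w rp.1 rp.2 & (rp.2 < q < rp.2 + size rp.1)%N].

Definition endp (S : finType) (rp : seq S * nat) : nat := (rp.2 + size rp.1)%N.

Definition cands (S : finType) (R : seq (seq S)) (w : seq S) (q : nat) : seq (seq S * nat) :=
  filter (good R w q) (allpairs pair R (iota 0 q)).

Definition argmx (T : Type) (F : T -> nat) (x0 : T) (l : seq T) : T :=
  foldr (fun x acc => if (F acc < F x)%N then x else acc) x0 l.

Definition best (S : finType) (R : seq (seq S)) (w : seq S) (q : nat) : seq S * nat :=
  argmx (@endp S) (head ([::], 0%N) (cands R w q)) (behead (cands R w q)).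

Definition Ew (S : finType) (R : seq (seq S)) (w : seq S) (q : nat) : nat := endp (best R w q).

Lemma argmx_in (T : eqType) (F : T -> nat) x0 l : argmx F x0 l \in x0 :: l.
Proof.
elim: l => [|x l IH] /=; first by rewrite inE.
case: ifP => _; first by rewrite !inE eqxx orbT.
move: IH; rewrite !inE => /orP [->|->] //; by rewrite !orbT.
Qed.

Lemma argmx_ge (T : eqType) (F : T -> nat) x0 l y : y \in x0 :: l -> (F y <= F (argmx F x0 l))%N.
Proof.
elim: l y => [|x l IH] y /=; first by rewrite inE => /eqP ->.
have IH0 := IH x0 (mem_head _ _).
rewrite !inE => /or3P [/eqP ->|/eqP ->|yl].
- by case: ltnP => h //; apply: (leq_trans IH0); apply: ltnW.
- by case: ltnP.
- have IHy : (F y <= F (argmx F x0 l))%N by apply: IH; rewrite inE yl orbT.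
  by case: ltnP => h //; apply: (leq_trans IHy); apply: ltnW.
Qed.

Lemma occbP (S : finType) (w r : seq S) p :
  reflect (forall i, (i < size r)%N -> Gw w (p + i) = nthS r i) (occb w r p).
Proof.
apply: (iffP allP) => h i.
- by move=> hi; apply/eqP; apply: h; rewrite mem_iota.
- by rewrite mem_iota add0n => hi; apply/eqP; apply: h.
Qed.

Lemma mem_cands (S : finType) (R : seq (seq S)) w q rp : (rp \in cands R w q) = good R w q rp.
Proof.
rewrite /cands mem_filter; case g: (good R w q rp) => //=.
case: rp g => r p /and3P [/= rR _ /andP [pq _]].
by apply: (allpairs_f pair) => //; rewrite mem_iota.
Qed.

Lemma best_good (S : finType) (R : seq (seq S)) w q :
  (exists rp, good R w q rp) ->
  good R w q (best R w q) /\ forall rp, good R w q rp -> (endp rp <= Ew R w q)%N.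
Proof.
move=> [rp0 g0].
have : rp0 \in cands R w q by rewrite mem_cands.
rewrite /Ew /best; case: (cands R w q) (mem_cands R w q) => [|c0 c] hc //= _.
split; first by rewrite -hc; apply: argmx_in.
by move=> rp g; apply: argmx_ge; rewrite hc.
Qed.

Lemma Gw_per (S : finType) (w : seq S) n : Gw w (n + size w) = Gw w n.
Proof. by rewrite /Gw PoszD cyc_per. Qed.

Lemma good_exists (S : finType) (R : seq (seq S)) (w : seq S) (L : nat) q :
  covered R (cyc w) -> (forall r : seq S, r \in R -> (size r <= L)%N) -> (L <= q)%N ->
  exists rp, good R w q rp.
Proof.
move=> cov hL Lq; case: (cov q%:Z) => r [p [rR [o [h1 h2]]]].
have hr := hL r rR.
have p0 : 0 <= p by lia.
have [n en] := int_nat_split p0.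
exists (r, n); apply/and3P; split=> //=; last by apply/andP; split; lia.
apply/occbP => i hi; rewrite -o // /Gw en addr0 PoszD //.
Qed.

Lemma good_up (S : finType) (R : seq (seq S)) (w : seq S) (q : nat) (r : seq S) (p : nat) :
  good R w q (r, p) -> good R w (q + size w)%N (r, (p + size w)%N).
Proof.
move=> /and3P [/= rR /occbP o /andP [h1 h2]]; apply/and3P; split=> //=.
  apply/occbP => i hi; rewrite -o // -(Gw_per w (p + i)); congr Gw; lia.
apply/andP; split; lia.
Qed.

Lemma good_upm (S : finType) (R : seq (seq S)) (w : seq S) (q : nat) (r : seq S) (p m : nat) :
  good R w q (r, p) -> good R w (q + m * size w)%N (r, (p + m * size w)%N).
Proof.
elim: m => [|m IH] g; first by rewrite !mul0n !addn0.
have := good_up (IH g); rewrite !mulSn; congr good; [lia | congr pair; lia].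
Qed.

Lemma good_down (S : finType) (R : seq (seq S)) (w : seq S) (q : nat) (r : seq S) (p : nat) :
  good R w (q + size w)%N (r, p) -> (size w <= p)%N -> good R w q (r, (p - size w)%N).
Proof.
move=> /and3P [/= rR /occbP o /andP [h1 h2]] hp; apply/and3P; split=> //=.
  apply/occbP => i hi; rewrite -o // -(Gw_per w (p - size w + i)); congr Gw; lia.
apply/andP; split; lia.
Qed.

Definition Lhyp (S : finType) (R : seq (seq S)) (L : nat) :=
  forall r : seq S, r \in R -> (size r <= L)%N.

Lemma Ew_spec (S : finType) (R : seq (seq S)) (w : seq S) (L q : nat) :
  covered R (cyc w) -> Lhyp R L -> (L <= q)%N ->
  good R w q (best R w q) /\ forall rp, good R w q rp -> (endp rp <= Ew R w q)%N.
Proof. by move=> cov hL Lq; apply: best_good; apply: good_exists cov hL Lq. Qed.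

Lemma Ew_gt (S : finType) (R : seq (seq S)) (w : seq S) (L q : nat) :
  covered R (cyc w) -> Lhyp R L -> (L <= q)%N -> (q < Ew R w q)%N.
Proof.
move=> cov hL Lq; have [g _] := Ew_spec cov hL Lq.
move: g; rewrite /Ew /endp; case: (best R w q) => r p /and3P [_ _ /andP [h1 h2]]; simpl in h1, h2 |- *; lia.
Qed.

Lemma Ew_shift (S : finType) (R : seq (seq S)) (w : seq S) (L q : nat) :
  covered R (cyc w) -> Lhyp R L -> (L <= q)%N ->
  Ew R w (q + size w)%N = (Ew R w q + size w)%N.
Proof.
move=> cov hL Lq.
have Lq' : (L <= q + size w)%N by lia.
have [g1 m1] := Ew_spec cov hL Lq.
have [g2 m2] := Ew_spec cov hL Lq'.
apply/eqP; rewrite eqn_leq; apply/andP; split.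
  move: g2; rewrite {1}/Ew /endp; case: (best R w (q + size w)) => r p g2 /=.
  have rL : (size r <= L)%N by apply: hL; case/and3P: g2.
  have pd : (size w <= p)%N by move: g2 => /and3P [_ _ /andP [_ h]]; simpl in h; lia.
  have := m1 _ (good_down g2 pd); rewrite /endp /=; lia.
move: g1; rewrite {1}/Ew /endp; case: (best R w q) => r p g1 /=.
have := m2 _ (good_up g1); rewrite /endp /=; lia.
Qed.

Lemma Ew_mul (S : finType) (R : seq (seq S)) (w : seq S) (L q m : nat) :
  covered R (cyc w) -> Lhyp R L -> (L <= q)%N ->
  Ew R w (q + m * size w)%N = (Ew R w q + m * size w)%N.
Proof.
move=> cov hL Lq; elim: m => [|m IH]; first by rewrite !mul0n !addn0.
have -> : (q + m.+1 * size w = (q + m * size w) + size w)%N by rewrite mulSn; lia.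
rewrite (Ew_shift cov hL) ?IH; [rewrite mulSn; lia | lia].
Qed.

Lemma Ew_step (S : finType) (R : seq (seq S)) (w : seq S) (L q : nat) A B :
  covered R (cyc w) -> Lhyp R L -> (L <= q)%N ->
  good R w q A -> endp A = Ew R w q ->
  good R w (Ew R w q) B -> endp B = Ew R w (Ew R w q) ->
  (A.2 <= B.2)%N /\ (B.2 < endp A)%N /\ (endp A < endp B)%N.
Proof.
move=> cov hL Lq gA eA gB eB.
have gt1 := Ew_gt cov hL Lq.
have gt2 := Ew_gt cov hL (_ : (L <= Ew R w q)%N).
have {gt2} gt2 := gt2 ltac:(lia).
have [_ m1] := Ew_spec cov hL Lq.
move: gA gB eA eB; case: A => ra pa; case: B => rb pb.
move=> /and3P [raR oa /andP [a1 a2]] /and3P [rbR ob /andP [b1 b2]]; rewrite /endp /= => eA eB; simpl in a1, a2, b1, b2.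
split; last (split; lia).
rewrite leqNgt; apply/negP => hlt.
have gB' : good R w q (rb, pb).
  apply/and3P; split=> //; apply/andP; split=> /=; lia.
have := m1 _ gB'; rewrite /endp /=; lia.
Qed.

Lemma overlap_eq (S : finType) (w : seq S) (A B : seq S * nat) :
  occb w A.1 A.2 -> occb w B.1 B.2 -> (A.2 <= B.2)%N -> (B.2 <= endp A)%N -> (endp A <= endp B)%N ->
  drop (size A.1 - (endp A - B.2)) A.1 = take (endp A - B.2) B.1.
Proof.
case: A => ra pa; case: B => rb pb /= /occbP oa /occbP ob; rewrite /endp /= => h1 h2 h3.
apply: nthS_eq.
  rewrite size_drop size_take; case: ltnP => h; lia.
move=> i; rewrite size_drop => hi.
rewrite nthS_drop nthS_take; last by lia.
rewrite -oa; last by lia.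
rewrite -ob; last by lia.
congr Gw; lia.
Qed.

Lemma chain_from_occ (S : finType) (R : seq (seq S)) (w : seq S) (O : nat -> seq S * nat) (N m : nat) :
  w != [::] -> (0 < N)%N -> (0 < m)%N ->
  (forall k, (k <= N)%N -> ((O k).1 \in R) && occb w (O k).1 (O k).2) ->
  (forall k, (k < N)%N -> [/\ ((O k).2 <= (O k.+1).2)%N, ((O k.+1).2 < endp (O k))%N &
                             (endp (O k) < endp (O k.+1))%N]) ->
  (O N).1 = (O 0%N).1 -> endp (O N) = (endp (O 0%N) + m * size w)%N ->
  CC R (cyc w).
Proof.
move=> wn N0 m0 H1 H2 H3 H4.
set rs := mkseq (fun k => (O k).1) N.+1.
set ts := mkseq (fun k => (endp (O k) - (O k.+1).2)%N) N.
have nrs : forall k, (k <= N)%N -> nth [::] rs k = (O k).1.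
  by move=> k hk; rewrite /rs nth_mkseq.
have nts : forall k, (k < N)%N -> nth 0%N ts k = (endp (O k) - (O k.+1).2)%N.
  by move=> k hk; rewrite /ts nth_mkseq.
have srs : size rs = N.+1 by rewrite size_mkseq.
have sts : size ts = N by rewrite size_mkseq.
have rc : read_chain R rs ts.
  split; first by rewrite srs.
  split; first by rewrite srs sts.
  split.
    move=> r /mapP [k]; rewrite mem_iota add0n => /andP [_ hk] ->.
    by case/andP: (H1 k hk).
  move=> k; rewrite srs => hk; have {}hk : (k < N)%N by [].
  cbv zeta; rewrite nrs ?nts //; last by lia.
  rewrite nrs; last by lia.
  have [h1 h2 h3] := H2 k hk.
  case/andP: (H1 k (ltnW hk)) => _ oA.
  case/andP: (H1 k.+1 hk) => _ oB.
  split.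
    move: h1 h2 h3; rewrite /endp => h1 h2 h3.
    rewrite leq_min; apply/and3P; split; lia.
  apply: overlap_eq => //; lia.
have inv : forall k, (k <= N)%N ->
   [/\ size (Mk rs ts k) = (endp (O k) - (O 0%N).2)%N, ((O 0%N).2 <= (O k).2)%N &
       forall n, (n < size (Mk rs ts k))%N -> nthS (Mk rs ts k) n = Gw w ((O 0%N).2 + n)].
  elim=> [|k IH] hk.
    have -> : Mk rs ts 0 = (O 0%N).1 by rewrite /Mk nrs // /= cats0.
    case/andP: (H1 0%N hk) => _ /occbP o0.
    split=> //; first by rewrite /endp; lia.
    by move=> n hn; rewrite o0.
  have [s1 s2 s3] := IH (ltnW hk).
  have [h1 h2 h3] := H2 k hk.
  case/andP: (H1 k.+1 hk) => _ /occbP oB.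
  rewrite Mk_S nts // nrs //.
  have e1 : size (Mk rs ts k ++ drop (endp (O k) - (O k.+1).2) (O k.+1).1)%N =
            (endp (O k.+1) - (O 0%N).2)%N.
    rewrite size_cat size_drop s1; move: h1 h2 h3 s2; rewrite /endp; lia.
  split=> //; first lia.
  move=> n; rewrite e1 => hn; rewrite nthS_cat.
  case: ltnP => hn2; first by apply: s3.
  rewrite nthS_drop -oB; last by move: hn hn2 h1 h2 h3 s2; rewrite s1 /endp; lia.
  congr Gw; move: hn hn2 h1 h2 h3 s2; rewrite s1 /endp; lia.
have [s1 s2 s3] := inv N (leqnn N).
have em : merged rs ts = Mk rs ts N by rewrite /merged srs.
exists rs, ts; split.
  split=> //; split; first by rewrite srs.
  by rewrite (last_nth [::]) srs /= nrs // nrs.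
cbv zeta; rewrite nrs //.
set x := drop _ _.
have sx : size x = (m * size w)%N.
  rewrite /x size_drop em s1 H4; move: s1 s2; rewrite /endp; lia.
have nx : forall n, (n < size x)%N -> nthS x n = Gw w (endp (O 0%N) + n).
  move=> n hn; rewrite /x em nthS_drop s3; last by move: hn; rewrite sx s1 H4 /endp; lia.
  congr Gw; rewrite /endp; lia.
have d0 : (0 < size w)%N by rewrite lt0n size_eq0.
have xn : x != [::] by rewrite -size_eq0 sx; rewrite muln_eq0 negb_or; apply/andP; split; lia.
split=> //.
set c := (endp (O 0%N))%:Z.
have hg := @cyc_unique S x (fun z => cyc w (z + c)) xn.
exists (- c) => z.
rewrite -hg.
- by rewrite -addrA addNr addr0.
- move=> z'; rewrite sx /=.
  rewrite -(per_mul (@cyc_per S w) (z' + c) m); congr cyc.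
  rewrite PoszM; lia.
- move=> n hn /=; rewrite nx // /Gw; congr cyc; lia.
Qed.
Local Close Scope ring_scope.

Lemma pigeon (h : nat -> nat) (d : nat) : (0 < d)%N ->
  exists i j, (i < j <= d)%N /\ (h i %% d)%N = (h j %% d)%N.
Proof.
move=> d0.
case: (boolP [exists i : 'I_d.+1, exists j : 'I_d.+1, (i < j)%N && ((h i %% d)%N == (h j %% d)%N)]).
  move=> /existsP [i /existsP [j /andP [ij /eqP e]]].
  by exists i, j; split=> //; rewrite ij /= -ltnS ltn_ord.
move=> nex; exfalso.
pose f (k : 'I_d.+1) : 'I_d := Ordinal (ltn_pmod (h k) d0).
have inj : injective f.
  move=> a b /(congr1 val) /= e; apply/val_inj => /=.
  case: (ltngtP a b) => // hab; case/negP: nex; apply/existsP.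
  - by exists a; apply/existsP; exists b; rewrite hab e eqxx.
  - by exists b; apply/existsP; exists a; rewrite hab e eqxx.
by have := leq_card f inj; rewrite !card_ord ltnn.
Qed.

Lemma covered_CC (S : finType) (R : seq (seq S)) (w : seq S) :
  w != [::] -> covered R (cyc w) -> CC R (cyc w).
Proof.
move=> wn cov.
set L := max_read_length R.
have hL : Lhyp R L by move=> r rR; exact: leq_bigmax_seq.
have d0 : (0 < size w)%N by rewrite lt0n size_eq0.
pose Q k := iter k (Ew R w) L.
have QS : forall k, Q k.+1 = Ew R w (Q k) by [].
have QL : forall k, (L <= Q k)%N.
  elim=> [|k IH] //; rewrite QS; apply: ltnW; apply: leq_ltn_trans IH (Ew_gt cov hL IH).
have Qlt : forall i j, (i < j)%N -> (Q i < Q j)%N.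
  move=> i; elim=> [|j IH] // ij; rewrite QS.
  have hE := Ew_gt cov hL (QL j).
  move: ij; rewrite ltnS leq_eqVlt => /orP [/eqP ->|hij] //.
  by have := IH hij; lia.
have [i [j [/andP [ij jd] eqm]]] := pigeon Q d0.
have Qij := Qlt i j ij.
have dv : (size w %| Q j - Q i)%N by rewrite -eqn_mod_dvd ?eqm // ltnW.
set m := ((Q j - Q i) %/ size w)%N.
have eQ : Q j = (Q i + m * size w)%N by rewrite /m divnK //; lia.
have m0 : (0 < m)%N.
  rewrite lt0n; apply/eqP => m00; move: eQ; rewrite m00 mul0n addn0; lia.
set N := (j - i)%N.
set b0 := best R w (Q i).
pose O k := if (k < N)%N then best R w (Q (i + k)) else (b0.1, (b0.2 + m * size w)%N).
have spec : forall k, (k <= N)%N -> good R w (Q (i + k)) (O k) /\ endp (O k) = Ew R w (Q (i + k)).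
  move=> k; rewrite leq_eqVlt => /orP [/eqP ->|hk].
    rewrite /O ltnn /N subnKC ?(ltnW ij) // eQ (Ew_mul _ cov hL (QL i)).
    have [g _] := Ew_spec cov hL (QL i).
    rewrite -/b0 in g; rewrite /Ew -/b0.
    have g' : good R w (Q i) (b0.1, b0.2) by rewrite -surjective_pairing.
    split; first exact: good_upm g'.
    by rewrite /endp /=; lia.
  rewrite /O hk; split=> //; exact: (Ew_spec cov hL (QL _)).1.
have N0 : (0 < N)%N by rewrite /N; lia.
apply: (chain_from_occ (O := O) (N := N) (m := m)) => //.
- by move=> k hk; case/and3P: (spec k hk).1 => -> -> _.
- move=> k hk.
  have [gA eA] := spec k (ltnW hk).
  have [gB eB] := spec k.+1 hk.
  rewrite addnS QS in gB eB.
  have [h1 [h2 h3]] := Ew_step cov hL (QL _) gA eA gB eB.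
  by split.
- by rewrite /O ltnn N0 addn0.
- by rewrite /O ltnn N0 addn0 /endp /= -/b0; lia.
Qed.

Lemma CC_covered' (S : finType) (R : seq (seq S)) (w : seq S) :
  read_set R -> w != [::] -> CC R (cyc w) <-> covered R (cyc w).
Proof.
move=> rs wn; split; last exact: covered_CC.
move=> [rs0 [ts [cc [xn [k hk]]]]].
apply: (covered_ext (f := fun i => cyc (drop (size (nth [::] rs0 0)) (merged rs0 ts)) (i + k)%R)) => //.
apply: covered_shift; exact: chain_covered.
Qed.


Theorem theorem7 (S : finType) (R : seq (seq S)) :
  read_set R ->
  (forall v : seq S, size v = 2 * max_read_length R -> conductor (CC R) v) /\
  (forall r : seq S, non_contained R r -> conductor (CC R) r).
Proof.
move=> rs; split.
- move=> v hv; apply: (conductor_gen (lo := - (max_read_length R)%:Z)).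
    by move=> w wn; apply: CC_covered'.
  apply: transfer_window hv => r rR.
  exact: leq_bigmax_seq.
- move=> r nc; apply: (conductor_gen (lo := - (size r)%:Z + 1)).
    by move=> w wn; apply: CC_covered'.
  have rn : r != [::].
    by case: nc => rR _; apply/eqP => e; move: rs; rewrite /read_set -e rR.
  exact: (transfer_nc rn nc).
Qed.
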